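(* Let $n\in\mathbb{N}$ and $(\sigma_1,\delta_2,\sigma_2,\dots,\delta_n,\sigma_n)\in\Sigma_n$, and let $$I_n(\sigma_1,\delta_2,\dots,\delta_n,\sigma_n)=\{x\in(0,1)\colon d_1(x)=\sigma_1,\ \epsilon_i(x)=\delta_i,\ d_i(x)=\sigma_i\ (2\le i\le n)\}.$$ If $\sigma_n$ is odd, this set is a singleton. If $\sigma_n$ is even, it is an open interval with endpoints $$x_1=\sum_{i=1}^{n-1}\frac{\delta_i}{\sigma_1\cdots\sigma_i}+\frac{\delta_n}{\sigma_1\cdots\sigma_{n-1}(\sigma_n-1)},\qquad x_2=\sum_{i=1}^{n-1}\frac{\delta_i}{\sigma_1\cdots\sigma_i}+\frac{\delta_n}{\sigma_1\cdots\sigma_{n-1}(\sigma_n+1)}$$ (with $\delta_1=1$), namely $(x_1,x_2)$ if $\delta_n=-1$ and $(x_2,x_1)$ if $\delta_n=1$. Consequently its length is $0$ if $\sigma_n$ is odd and $\frac{2}{\sigma_1\sigma_2\cdots\sigma_{n-1}(\sigma_n-1)(\sigma_n+1)}$ if $\sigma_n$ is even.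
   Context: Define $T\colon[0,1)\to[0,1)$ by: for $k\in\mathbb{N}$, $Tx=\lceil 1/x\rceil x-1$ if $x\in(\frac{1}{2k},\frac{1}{2k-1})$; $Tx=1-\lfloor 1/x\rfloor x$ if $x\in(\frac{1}{2k+1},\frac{1}{2k})$; $Tx=0$ if $x\in\{0\}\cup\{1/n\colon n\ge 2\}$. For $x\in(0,1)$ define $d_1(x)=\lceil 1/x\rceil$, $s_1(x)=1$ if $x\in[\frac{1}{2k},\frac{1}{2k-1})$ for some $k$, and $d_1(x)=\lfloor 1/x\rfloor$, $s_1(x)=-1$ if $x\in[\frac{1}{2k+1},\frac{1}{2k})$ for some $k$. Set $d_{n+1}(x)=d_1(T^nx)$, $s_{n+1}(x)=s_1(T^nx)$ (when $T^nx\ne0$), $\epsilon_1(x)=1$, $\epsilon_{n+1}(x)=\prod_{k=1}^n s_k(x)$. $\Sigma_1=\{(\sigma_1)\colon \sigma_1\in\mathbb{N},\sigma_1\ge2\}$, and for $n\ge2$, $\Sigma_n$ is the set of tuples $(\sigma_1,\delta_2,\sigma_2,\dots,\delta_n,\sigma_n)$ with $\delta_i\in\{1,-1\}$, positive integers $2\le\sigma_1\le\sigma_2\le\cdots\le\sigma_n$ with $\sigma_i$ even for $1\le i\le n-1$, and (with $\delta_1:=1$) $\sigma_{i+1}\ge\sigma_i+2$ whenever $\delta_{i+1}=-\delta_i$, $1\le i\le n-1$. *)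

(* Defs.v *)
From HB Require Import structures.
From mathcomp Require Import all_boot all_order all_algebra.
From mathcomp Require Import all_classical all_reals all_analysis.
Set Implicit Arguments. Unset Strict Implicit. Unset Printing Implicit Defensive.
Import Order.TTheory GRing.Theory Num.Theory.
Local Open Scope ring_scope.

Section Defs.
Variable R : realType.

(* The map T : [0,1) -> [0,1), defined by cases as in the paper
   (value 0 on {0} and on {1/n : n >= 2}, and outside [0,1)). *)
Definition Tmap (x : R) : R :=
  if `[< exists k : nat, (0 < k)%N /\
         1 / (2 * k)%:R < x /\ x < 1 / (2 * k - 1)%:R >]
  then (Num.ceil (1 / x))%:~R * x - 1
  else if `[< exists k : nat, (0 < k)%N /\
         1 / (2 * k + 1)%:R < x /\ x < 1 / (2 * k)%:R >]
  then 1 - (Num.floor (1 / x))%:~R * x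
  else 0.

Definition d1 (x : R) : int :=
  if `[< exists k : nat, (0 < k)%N /\
         1 / (2 * k)%:R <= x /\ x < 1 / (2 * k - 1)%:R >]
  then Num.ceil (1 / x)
  else if `[< exists k : nat, (0 < k)%N /\
         1 / (2 * k + 1)%:R <= x /\ x < 1 / (2 * k)%:R >]
  then Num.floor (1 / x)
  else 0.

Definition s1 (x : R) : int :=
  if `[< exists k : nat, (0 < k)%N /\
         1 / (2 * k)%:R <= x /\ x < 1 / (2 * k - 1)%:R >]
  then 1
  else if `[< exists k : nat, (0 < k)%N /\
         1 / (2 * k + 1)%:R <= x /\ x < 1 / (2 * k)%:R >]
  then -1
  else 0.

Definition digit (i : nat) (x : R) : int := d1 (iter i.-1 Tmap x).
Definition sgn (i : nat) (x : R) : int := s1 (iter i.-1 Tmap x).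

Definition eps (i : nat) (x : R) : int := \prod_(1 <= k < i) sgn k x.

(* The cylinder set I_n(sigma_1, delta_2, sigma_2, ..., delta_n, sigma_n).
   Digits d_i(x) are only defined when T^{i-1} x <> 0, so this is required. *)
Definition Icyl (n : nat) (sigma : nat -> nat) (delta : nat -> int) : set R :=
  [set x | 0 < x /\ x < 1 /\
     (forall i, (1 <= i <= n)%N ->
        iter i.-1 Tmap x != 0 /\ digit i x = (sigma i)%:Z) /\
     (forall i, (2 <= i <= n)%N -> eps i x = delta i)].

Definition prodsig (sigma : nat -> nat) (i : nat) : R :=
  \prod_(1 <= j < i.+1) (sigma j)%:R.

Definition xpt (n : nat) (sigma : nat -> nat) (delta : nat -> int) (c : R) : R :=
  \sum_(1 <= i < n) (delta i)%:~R / prodsig sigma i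
  + (delta n)%:~R / (prodsig sigma n.-1 * ((sigma n)%:R + c)).

End Defs.

Definition delta1 (delta : nat -> int) (i : nat) : int :=
  if i == 1%N then 1 else delta i.

(* (sigma_1, delta_2, sigma_2, ..., delta_n, sigma_n) \in Sigma_n  (n >= 1),
   with 1-based indexing; only the values at indices 1..n matter
   (delta at indices 2..n).  delta_1 := 1 via delta1. *)
Definition inSigma (n : nat) (sigma : nat -> nat) (delta : nat -> int) : Prop :=
  (1 <= n)%N /\
  (2 <= sigma 1)%N /\
  (forall i, (2 <= i <= n)%N -> delta i = 1 \/ delta i = -1) /\
  (forall i, (1 <= i < n)%N -> (sigma i <= sigma i.+1)%N) /\
  (forall i, (1 <= i < n)%N -> ~~ odd (sigma i)) /\
  (forall i, (1 <= i < n)%N ->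
      delta1 delta i.+1 = - delta1 delta i -> (sigma i + 2 <= sigma i.+1)%N).

(* Main.v *)
Require Import Defs.
From HB Require Import structures.
From mathcomp Require Import all_boot all_order all_algebra.
From mathcomp Require Import all_classical all_reals all_analysis.
From mathcomp Require Import ring lra zify.
Import Order.TTheory GRing.Theory Num.Theory.
Local Open Scope ring_scope.
Local Open Scope classical_set_scope.

Lemma recip_le {R : realType} {a y : R} : 0 < a -> 0 < y -> (1/a <= y) = (1/y <= a).
Proof.
move=> a0 y0; rewrite !div1r -[y in LHS]invrK lef_pV2 // ?posrE ?invr_gt0 //.
Qed.

Lemma recip_lt {R : realType} {a y : R} : 0 < a -> 0 < y -> (1/a < y) = (1/y < a).
Proof.
move=> a0 y0; rewrite !div1r -[y in LHS]invrK ltf_pV2 // ?posrE ?invr_gt0 //.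
Qed.

Lemma recip_lt2 {R : realType} {b y : R} : 0 < b -> 0 < y -> (y < 1/b) = (b < 1/y).
Proof.
move=> b0 y0; rewrite !div1r -[y in LHS]invrK ltf_pV2 // ?posrE ?invr_gt0 //.
Qed.

Lemma recip_le2 {R : realType} {b y : R} : 0 < b -> 0 < y -> (y <= 1/b) = (b <= 1/y).
Proof.
move=> b0 y0; rewrite !div1r -[y in LHS]invrK lef_pV2 // ?posrE ?invr_gt0 //.
Qed.

Lemma ceil_nat {R : realType} (z : R) (m : nat) : (0 < m)%N ->
  (m - 1)%:R < z -> z <= m%:R -> Num.ceil z = m%:Z.
Proof.
move=> m0 h1 h2; apply: ceil_def; rewrite subzn //; apply/andP; split => //.
Qed.

Lemma floor_nat {R : realType} (z : R) (m : nat) :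
  m%:R <= z -> z < (m + 1)%:R -> Num.floor z = m%:Z.
Proof.
move=> h1 h2; apply: floor_def; rewrite -PoszD; apply/andP; split => //.
Qed.


Lemma natpos {R : realType} (m : nat) : (0 < m)%N -> 0 < m%:R :> R.
Proof. by rewrite ltr0n. Qed.

Lemma nat_lt {R : realType} {a b : nat} {z : R} : a%:R < z -> z <= b%:R -> (a < b)%N.
Proof. by move=> h1 h2; rewrite -(ltr_nat R); apply: (lt_le_trans h1 h2). Qed.

Lemma nat_lt' {R : realType} {a b : nat} {z : R} : a%:R <= z -> z < b%:R -> (a < b)%N.
Proof. by move=> h1 h2; rewrite -(ltr_nat R); apply: (le_lt_trans h1 h2). Qed.

Lemma nat_lt2 {R : realType} {a b : nat} {z : R} : a%:R < z -> z < b%:R -> (a < b)%N.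
Proof. by move=> h1 h2; rewrite -(ltr_nat R); apply: (lt_trans h1 h2). Qed.

Lemma d1_up {R : realType} (y : R) k : 0 < y -> (0 < k)%N ->
  (2 * k - 1)%:R < 1/y -> 1/y <= (2 * k)%:R -> d1 y = (2 * k)%:Z /\ s1 y = 1.
Proof.
move=> y0 k0 h1 h2.
have pa : 0 < (2 * k)%:R :> R by apply: natpos; lia.
have pb : 0 < (2 * k - 1)%:R :> R by apply: natpos; lia.
rewrite /d1 /s1 asboolT; last first.
  by exists k; split; [exact: k0 | rewrite (recip_le pa y0) (recip_lt2 pb y0); split].
split; last reflexivity.
by apply: ceil_nat; [lia | exact: h1 | exact: h2].
Qed.

Lemma T_up {R : realType} (y : R) k : 0 < y -> (0 < k)%N ->
  (2 * k - 1)%:R < 1/y -> 1/y < (2 * k)%:R -> Tmap y = (2 * k)%:R * y - 1.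
Proof.
move=> y0 k0 h1 h2.
have pa : 0 < (2 * k)%:R :> R by apply: natpos; lia.
have pb : 0 < (2 * k - 1)%:R :> R by apply: natpos; lia.
rewrite /Tmap asboolT; last first.
  by exists k; split; [exact: k0 | rewrite (recip_lt pa y0) (recip_lt2 pb y0); split].
rewrite (@ceil_nat _ _ (2 * k)); [reflexivity | lia | exact: h1 | exact: ltW].
Qed.

Lemma d1_dn {R : realType} (y : R) k : 0 < y -> (0 < k)%N ->
  (2 * k)%:R < 1/y -> 1/y < (2 * k + 1)%:R ->
  d1 y = (2 * k)%:Z /\ s1 y = -1 /\ Tmap y = 1 - (2 * k)%:R * y.
Proof.
move=> y0 k0 h1 h2.
have pa : 0 < (2 * k)%:R :> R by apply: natpos; lia.
have pc : 0 < (2 * k + 1)%:R :> R by apply: natpos; lia.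
rewrite /d1 /s1 /Tmap.
rewrite asboolF; last first.
  move=> [k' [k'0 []]].
  have pa' : 0 < (2 * k')%:R :> R by apply: natpos; lia.
  have pb' : 0 < (2 * k' - 1)%:R :> R by apply: natpos; lia.
  rewrite (recip_le pa' y0) (recip_lt2 pb' y0).
  move=> h3 h4; have := nat_lt h1 h3; have := nat_lt2 h4 h2; lia.
rewrite asboolT; last first.
  by exists k; split; [exact: k0 | rewrite (recip_le pc y0) (recip_lt2 pa y0); split; [exact: ltW|]].
rewrite asboolF; last first.
  move=> [k' [k'0 []]].
  have pa' : 0 < (2 * k')%:R :> R by apply: natpos; lia.
  have pb' : 0 < (2 * k' - 1)%:R :> R by apply: natpos; lia.
  rewrite (recip_lt pa' y0) (recip_lt2 pb' y0).
  move=> h3 h4; have := nat_lt2 h1 h3; have := nat_lt2 h4 h2; lia.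
rewrite asboolT; last first.
  by exists k; split; [exact: k0 | rewrite (recip_lt pc y0) (recip_lt2 pa y0); split].
rewrite (@floor_nat _ _ (2 * k)); [split; [reflexivity|split; reflexivity] | exact: ltW | exact: h2].
Qed.

Lemma d1_odd {R : realType} (y : R) k : 0 < y -> (0 < k)%N ->
  1/y = (2 * k + 1)%:R -> d1 y = (2 * k + 1)%:Z.
Proof.
move=> y0 k0 h.
have pa : 0 < (2 * k)%:R :> R by apply: natpos; lia.
have pc : 0 < (2 * k + 1)%:R :> R by apply: natpos; lia.
rewrite /d1.
rewrite asboolF; last first.
  move=> [k' [k'0 []]].
  have pa' : 0 < (2 * k')%:R :> R by apply: natpos; lia.
  have pb' : 0 < (2 * k' - 1)%:R :> R by apply: natpos; lia.
  rewrite (recip_le pa' y0) (recip_lt2 pb' y0) h ler_nat ltr_nat; lia.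
rewrite asboolT; last first.
  exists k; split; [exact: k0 | rewrite (recip_le pc y0) (recip_lt2 pa y0) h ler_nat ltr_nat; lia].
apply: floor_nat; rewrite h; [exact: lexx | rewrite ltr_nat; lia].
Qed.

Lemma T_int {R : realType} (y : R) m : 0 < y -> 1/y = m%:R -> Tmap y = 0.
Proof.
move=> y0 h; rewrite /Tmap.
rewrite asboolF; last first.
  move=> [k' [k'0 []]].
  have pa' : 0 < (2 * k')%:R :> R by apply: natpos; lia.
  have pb' : 0 < (2 * k' - 1)%:R :> R by apply: natpos; lia.
  rewrite (recip_lt pa' y0) (recip_lt2 pb' y0) h !ltr_nat; lia.
rewrite asboolF; last first.
  move=> [k' [k'0 []]].
  have pa' : 0 < (2 * k')%:R :> R by apply: natpos; lia.
  have pb' : 0 < (2 * k' + 1)%:R :> R by apply: natpos; lia.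
  rewrite (recip_lt pb' y0) (recip_lt2 pa' y0) h !ltr_nat; lia.
reflexivity.
Qed.

Lemma d1_inv {R : realType} (y : R) (s : nat) : 0 < y -> (0 < s)%N -> d1 y = s%:Z ->
  (exists k, [/\ (0 < k)%N, s = (2 * k)%N, (2 * k - 1)%:R < 1/y, 1/y <= (2 * k)%:R & s1 y = 1]) \/
  (exists k, [/\ (0 < k)%N, s = (2 * k)%N, (2 * k)%:R < 1/y, 1/y < (2 * k + 1)%:R & s1 y = -1]) \/
  (odd s /\ 1/y = s%:R).
Proof.
move=> y0 s0; rewrite /d1 /s1.
case: asboolP => [[k [k0 []]]|nA].
  have pa : 0 < (2 * k)%:R :> R by apply: natpos; lia.
  have pb : 0 < (2 * k - 1)%:R :> R by apply: natpos; lia.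
  rewrite (recip_le pa y0) (recip_lt2 pb y0).
  move=> h1 h2; rewrite (@ceil_nat _ _ (2 * k)); [|lia|exact: h2|exact: h1].
  by case=> <-; left; exists k; split.
case: asboolP => [[k [k0 []]]|nB]; last by move=> /eqP; rewrite eqz_nat; lia.
have pa : 0 < (2 * k)%:R :> R by apply: natpos; lia.
have pc : 0 < (2 * k + 1)%:R :> R by apply: natpos; lia.
rewrite (recip_le pc y0) (recip_lt2 pa y0).
move=> h1 h2; move: h1; rewrite le_eqVlt => /predU1P [e|h1].
  rewrite e (@floor_nat _ _ (2 * k + 1)); [|exact: lexx|rewrite ltr_nat; lia].
  case=> <-; right; right; split; [lia|reflexivity].
rewrite (@floor_nat _ _ (2 * k)); [|exact: ltW|exact: h1].
by case=> <-; right; left; exists k; split.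
Qed.


Lemma lt_inv {R : realType} (a y : R) : 0 < y -> (a < 1/y) = (a * y < 1).
Proof. by move=> y0; rewrite ltr_pdivlMr. Qed.
Lemma inv_lt {R : realType} (a y : R) : 0 < y -> (1/y < a) = (1 < a * y).
Proof. by move=> y0; rewrite ltr_pdivrMr. Qed.
Lemma inv_le {R : realType} (a y : R) : 0 < y -> (1/y <= a) = (1 <= a * y).
Proof. by move=> y0; rewrite ler_pdivrMr. Qed.

Lemma n2k {R : realType} (k : nat) : (0 < k)%N -> (2 * k - 1)%:R = 2 * k%:R - 1 :> R.
Proof. by move=> k0; rewrite natrB ?natrM //; lia. Qed.

Lemma step_fwd {R : realType} (y : R) (s : nat) : 0 < y -> y < 1 -> (0 < s)%N ->
  d1 y = s%:Z -> Tmap y != 0 ->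
  [/\ ~~ odd s, s1 y = 1 \/ s1 y = -1, 0 < Tmap y, Tmap y < 1 &
      s%:R * y = 1 + (s1 y)%:~R * Tmap y].
Proof.
move=> y0 y1 s0 hd hT.
case: (d1_inv _ _ y0 s0 hd) => [[k [k0 -> h1 h2 hs]]|[[k [k0 -> h1 h2 hs]]|[so e]]].
- move: h2; rewrite le_eqVlt => /predU1P [e|h2].
    by move: hT; rewrite (T_int _ _ y0 e) eqxx.
  rewrite (T_up _ _ y0 k0 h1 h2) hs.
  move: h1 h2; rewrite (lt_inv _ _ y0) (inv_lt _ _ y0) n2k // natrM => h1 h2.
  split; [by rewrite oddM | by left | lra | lra | ].
  rewrite /=; lra.
- case: (d1_dn _ _ y0 k0 h1 h2) => _ [hs' ->].
  move: h1 h2; rewrite (lt_inv _ _ y0) (inv_lt _ _ y0) natrD !natrM => h1 h2.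
  split; [by rewrite oddM | by right | lra | nra | ].
  rewrite hs /=; lra.
- by move: hT; rewrite (T_int _ _ y0 e) eqxx.
Qed.

Lemma d1_lower {R : realType} (y : R) (s : nat) : 0 < y -> (0 < s)%N -> d1 y = s%:Z ->
  (s%:R - 1) * y < 1.
Proof.
move=> y0 s0 hd.
case: (d1_inv _ _ y0 s0 hd) => [[k [k0 -> h1 h2 hs]]|[[k [k0 -> h1 h2 hs]]|[so e]]].
- by move: h1; rewrite (lt_inv _ _ y0) n2k // natrM.
- move: h1; rewrite (lt_inv _ _ y0) natrM => h1; lra.
- have : s%:R * y = 1 by rewrite -e div1r mulVf // gt_eqF.
  lra.
Qed.

Lemma step_bwd {R : realType} (y' : R) (k : nat) (s : int) : (0 < k)%N ->
  (s = 1 \/ s = -1) -> 0 < y' -> ((2 * k)%:R - s%:~R) * y' < 1 ->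
  let y := (1 + s%:~R * y') / (2 * k)%:R in
  [/\ 0 < y, y < 1, d1 y = (2 * k)%:Z, s1 y = s & Tmap y = y'].
Proof.
move=> k0 hs y'0 hy y.
have pk : 0 < k%:R :> R by apply: natpos.
have p2 : 0 < (2 * k)%:R :> R by apply: natpos; lia.
have e : (2 * k)%:R * y = 1 + s%:~R * y' by rewrite /y mulrC divfK // gt_eqF.
have y0 : 0 < y.
  rewrite /y; apply: divr_gt0 p2.
  case: hs => hs; rewrite hs ?mulrN1z -?[(1%:~R : R)]/(1 : R) in hy *; rewrite ?natrM in hy; nra.
have k1 : 1 <= k%:R :> R by rewrite ler1n.
case: hs => hs; rewrite hs ?mulrN1z -?[(1%:~R : R)]/(1 : R) in hy e *.
- have h1 : (2 * k - 1)%:R < 1/y.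
    rewrite (lt_inv _ _ y0) n2k // -?natrM; rewrite natrM in hy e; nra.
  have h2 : 1/y < (2 * k)%:R.
    rewrite (inv_lt _ _ y0) e; lra.
  case: (d1_up _ _ y0 k0 h1 (ltW h2)) => hd hs1.
  split => //.
  + rewrite natrM in hy e; nra.
  + by rewrite (T_up _ _ y0 k0 h1 h2) e; lra.
- have h1 : (2 * k)%:R < 1/y.
    rewrite (lt_inv _ _ y0) e; lra.
  have h2 : 1/y < (2 * k + 1)%:R.
    rewrite (inv_lt _ _ y0) natrD mulrDl e mul1r; rewrite natrM in hy e; nra.
  case: (d1_dn _ _ y0 k0 h1 h2) => hd [hs1 hT].
  split => //.
  + rewrite natrM in hy e; nra.
  + by rewrite hT e; lra.
Qed.


Lemma sig_ge2 {n sigma delta} : inSigma n sigma delta ->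
  forall i, (1 <= i <= n)%N -> (2 <= sigma i)%N.
Proof.
move=> [n1 [s1 [_ [hmon _]]]]; elim=> [|i IH] hi; first lia.
case: i IH hi => [|i] IH hi; first exact: s1.
have := hmon i.+1; have := IH; lia.
Qed.

Lemma D_pm {n sigma delta} : inSigma n sigma delta ->
  forall i, (1 <= i <= n)%N -> delta1 delta i = 1 \/ delta1 delta i = -1.
Proof.
move=> [n1 [s1 [hd _]]] i hi; rewrite /delta1; case: eqP => [_|ne]; first by left.
apply: hd; lia.
Qed.

Lemma sig_even {n sigma delta} : inSigma n sigma delta ->
  forall i, (1 <= i < n)%N -> ~~ odd (sigma i).
Proof. by move=> [_ [_ [_ [_ [he _]]]]]. Qed.

Lemma sig_range {R : realType} {n sigma delta} : inSigma n sigma delta ->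
  forall m, (1 <= m < n)%N ->
  (sigma m)%:R - ((delta1 delta m) * (delta1 delta m.+1))%:~R <= (sigma m.+1)%:R - 1 :> R.
Proof.
move=> hS m hm.
have [_ [_ [_ [hmon [_ hjump]]]]] := hS.
have := hmon m hm; have := hjump m hm.
have hm1 : (1 <= m <= n)%N by lia.
have hm2 : (1 <= m.+1 <= n)%N by lia.
case: (D_pm hS _ hm1); case: (D_pm hS _ hm2).
all: move=> -> -> hj hmo; rewrite ?opprK in hj.
all: rewrite ?mulrNN ?mul1r ?mulr1 ?mulrN1z ?opprK -?[(1%:~R : R)]/(1 : R).
all: first [ rewrite lerD2r ler_nat; exact hmo
           | have {}hj := hj erefl; rewrite -(natrD _ _ 1) -(@natrB _ _ 1); [rewrite ler_nat; lia | lia] ].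
Qed.


Lemma Icyl1 {R : realType} sigma delta (x : R) :
  Icyl 1 sigma delta x <-> [/\ 0 < x, x < 1, x != 0 & d1 x = (sigma 1%N)%:Z].
Proof.
split.
- move=> [x0 [x1 [hd _]]]; have [h1 h2] := hd 1%N erefl.
  split; [exact: x0 | exact: x1 | exact: h1 | exact: h2].
- move=> [x0 x1 hx hd]; split; [exact: x0 | split; [exact: x1 | split]].
  + move=> i hi; have -> : i = 1%N by lia.
    split; [exact: hx | exact: hd].
  + move=> i hi; lia.
Qed.

Lemma IcylS {R : realType} m sigma delta (x : R) : (0 < m)%N ->
  Icyl m.+1 sigma delta x <->
  [/\ Icyl m sigma delta x, iter m (@Tmap R) x != 0, d1 (iter m (@Tmap R) x) = (sigma m.+1)%:Z
    & eps m.+1 x = delta m.+1].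
Proof.
move=> m0; split.
- move=> [x0 [x1 [hd he]]].
  have [h1 h2] := hd m.+1 (ltac:(lia)).
  split; [| exact: h1 | exact: h2 | apply: he; lia].
  split; [exact: x0 | split; [exact: x1 | split]].
  + move=> i hi; apply: hd; lia.
  + move=> i hi; apply: he; lia.
- move=> [[x0 [x1 [hd he]]] h1 h2 h3].
  split; [exact: x0 | split; [exact: x1 | split]].
  + move=> i hi; case: (ltnP i m.+1) => hi'.
      apply: hd; lia.
    have -> : i = m.+1 by lia.
    split; [exact: h1 | exact: h2].
  + move=> i hi; case: (ltnP i m.+1) => hi'.
      apply: he; lia.
    have -> : i = m.+1 by lia.
    exact: h3.
Qed.

Lemma eps1 {R : realType} (x : R) : eps 1 x = 1.
Proof. by rewrite /eps big_geq. Qed.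

Lemma epsS {R : realType} m (x : R) : (0 < m)%N ->
  eps m.+1 x = eps m x * s1 (iter m.-1 (@Tmap R) x).
Proof. by move=> m0; rewrite /eps big_nat_recr. Qed.

Lemma eps_Icyl {R : realType} m sigma delta (x : R) : (0 < m)%N ->
  Icyl m sigma delta x -> eps m x = delta1 delta m.
Proof.
move=> m0 [_ [_ [_ he]]]; case: m m0 he => [|[|m]] m0 he; first by [].
  by rewrite eps1.
rewrite he; last lia. by [].
Qed.

Definition Asum {R : realType} sigma delta m : R :=
  \sum_(1 <= i < m) ((delta1 delta i)%:~R : R) / prodsig R sigma i.

Lemma Asum1 {R : realType} sigma delta : Asum sigma delta 1 = 0 :> R.
Proof. by rewrite /Asum big_geq. Qed.

Lemma AsumS {R : realType} sigma delta m : (0 < m)%N ->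
  Asum sigma delta m.+1 = Asum sigma delta m + (delta1 delta m)%:~R / prodsig R sigma m :> R.
Proof. by move=> m0; rewrite /Asum big_nat_recr. Qed.

Lemma prodsig0 {R : realType} sigma : prodsig R sigma 0 = 1.
Proof. by rewrite /prodsig big_geq. Qed.

Lemma prodsigS {R : realType} sigma m :
  prodsig R sigma m.+1 = prodsig R sigma m * (sigma m.+1)%:R.
Proof. by rewrite /prodsig big_nat_recr. Qed.

Lemma prodsig_pos {R : realType} n sigma delta : inSigma n sigma delta ->
  forall m, (m <= n)%N -> 0 < prodsig R sigma m.
Proof.
move=> hS; elim=> [|m IH] hm; first by rewrite prodsig0 ltr01.
rewrite prodsigS mulr_gt0 //; first by apply: IH; lia.
apply: natpos; have := sig_ge2 hS m.+1; lia.
Qed.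

Lemma alg {R : realType} (A Dm Dn P s y y' : R) : P != 0 -> s != 0 ->
  (Dm = 1 \/ Dm = -1) -> (Dn = 1 \/ Dn = -1) ->
  s * y = 1 + Dm * Dn * y' ->
  A + Dm * y / P = (A + Dm / (P * s)) + Dn * y' / (P * s).
Proof.
move=> P0 s0 hm hn e.
have ey : y = (1 + Dm * Dn * y') / s by rewrite -e mulrAC divff // mul1r.
rewrite ey; case: hm => ->; case: hn => ->; field; rewrite P0 s0 //.
Qed.


Lemma even_half (s : nat) : ~~ odd s -> (2 * s./2)%N = s.
Proof.
move=> hs; have := odd_double_half s; rewrite (negbTE hs) add0n -mul2n; by [].
Qed.

Lemma step_bwd' {R : realType} (y' : R) (sg : nat) (s : int) : (2 <= sg)%N -> ~~ odd sg ->
  (s = 1 \/ s = -1) -> 0 < y' -> (sg%:R - s%:~R) * y' < 1 ->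
  let y := (1 + s%:~R * y') / sg%:R in
  [/\ 0 < y, y < 1, d1 y = sg%:Z, s1 y = s & Tmap y = y'].
Proof.
move=> h2 hev hs y'0 hy.
have e := even_half _ hev.
move: hy; rewrite -e => hy.
apply: step_bwd => //; lia.
Qed.

Lemma int_pm_mul (a b : int) : (a = 1 \/ a = -1) -> a * (a * b) = b.
Proof. by case=> ->; rewrite ?mul1r ?mulN1r ?opprK. Qed.

Lemma int_pm_solve (a b c : int) : (a = 1 \/ a = -1) -> a * c = b -> c = a * b.
Proof. by move=> ha <-; rewrite int_pm_mul. Qed.

Lemma intpm_R {R : realType} (a : int) : (a = 1 \/ a = -1) -> (a%:~R = 1 :> R) \/ (a%:~R = -1 :> R).
Proof. by case=> ->; [left | right; rewrite mulrN1z]. Qed.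

Lemma claim {R : realType} n sigma delta (hS : inSigma n sigma delta) m : (1 <= m <= n)%N ->
  (forall x : R, Icyl m sigma delta x ->
     [/\ 0 < iter m.-1 (@Tmap R) x, iter m.-1 (@Tmap R) x < 1,
         d1 (iter m.-1 (@Tmap R) x) = (sigma m)%:Z &
         x = Asum sigma delta m + (delta1 delta m)%:~R * iter m.-1 (@Tmap R) x / prodsig R sigma m.-1]) /\
  (forall y : R, 0 < y -> y < 1 -> d1 y = (sigma m)%:Z ->
     Icyl m sigma delta (Asum sigma delta m + (delta1 delta m)%:~R * y / prodsig R sigma m.-1) /\
     iter m.-1 (@Tmap R) (Asum sigma delta m + (delta1 delta m)%:~R * y / prodsig R sigma m.-1) = y).
Proof.
elim: m => [|m IH] hm; first lia.
case: m IH hm => [|m] IH hm.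
  have e : forall y : R, Asum sigma delta 1 + (delta1 delta 1)%:~R * y / prodsig R sigma 0 = y.
    by move=> y; rewrite Asum1 prodsig0 /delta1 /= -[(1%:~R : R)]/(1 : R) add0r mul1r divr1.
  split.
  - move=> x /Icyl1 [x0 x1 _ hd] /=; rewrite e; split; [exact: x0 | exact: x1 | exact: hd | reflexivity].
  - move=> y y0 y1 hd; rewrite e; split; last reflexivity.
    by apply/Icyl1; split; [exact: y0 | exact: y1 | exact: lt0r_neq0 | exact: hd].
have [IHa IHb] := IH (ltac:(lia)).
have hev : ~~ odd (sigma m.+1) by apply: (sig_even hS); lia.
have hs2 : (2 <= sigma m.+1)%N by apply: (sig_ge2 hS); lia.
have hs2' : (2 <= sigma m.+2)%N by apply: (sig_ge2 hS); lia.
have hDm := D_pm hS m.+1 (ltac:(lia)).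
have hDn := D_pm hS m.+2 (ltac:(lia)).
have eDn : delta1 delta m.+2 = delta m.+2 by [].
have Ppos : 0 < prodsig R sigma m by apply: (@prodsig_pos R _ _ _ hS m); lia.
have spos : 0 < (sigma m.+1)%:R :> R by apply: natpos; lia.
split.
- move=> x /(IcylS _ _ _ _ (ltn0Sn m)) [hx hT hd he].
  have [y0 y1 hdy ex] := IHa x hx.
  rewrite /= in y0 y1 hdy ex hT hd *.
  have [_ hs1 T0 T1 eT] := step_fwd _ (sigma m.+1) y0 y1 (ltac:(lia)) hdy hT.
  have hsy : s1 (iter m (@Tmap R) x) = delta1 delta m.+1 * delta1 delta m.+2.
    apply: (int_pm_solve _ _ _ hDm).
    by rewrite -(eps_Icyl _ _ _ _ (ltn0Sn m) hx) -epsS // he.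
  split; [exact: T0 | exact: T1 | exact: hd | ].
  apply: (etrans ex); rewrite (AsumS _ _ m.+1) // (prodsigS _ m).
  apply: alg; [exact: lt0r_neq0 | exact: lt0r_neq0 | exact: intpm_R | exact: intpm_R | ].
  by rewrite eT hsy intrM.
- move=> y' y'0 y'1 hd'.
  set s := delta1 delta m.+1 * delta1 delta m.+2.
  have hs : s = 1 \/ s = -1.
    by rewrite /s; case: hDm => ->; case: hDn => ->; rewrite ?mul1r ?mulN1r ?opprK; auto.
  have hr : ((sigma m.+1)%:R - s%:~R) * y' < 1.
    apply: le_lt_trans (d1_lower _ (sigma m.+2) y'0 (ltac:(lia)) hd').
    apply: ler_wpM2r; first exact: ltW.
    exact: (sig_range hS m.+1 (ltac:(lia))).
  have [y0 y1 hdy hsy hTy] := step_bwd' _ _ _ hs2 hev hs y'0 hr.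
  set y := (1 + s%:~R * y') / (sigma m.+1)%:R in y0 y1 hdy hsy hTy.
  have [hx hit] := IHb y y0 y1 hdy.
  rewrite /= in hx hit.
  set x0 := Asum sigma delta m.+1 + (delta1 delta m.+1)%:~R * y / prodsig R sigma m in hx hit.
  have ex : Asum sigma delta m.+2 + (delta1 delta m.+2)%:~R * y' / prodsig R sigma m.+1 = x0.
    rewrite (AsumS _ _ m.+1) // (prodsigS _ m) /x0; symmetry.
    apply: alg; [exact: lt0r_neq0 | exact: lt0r_neq0 | exact: intpm_R | exact: intpm_R | ].
    by rewrite /y mulrC divfK ?lt0r_neq0 // -intrM.
  rewrite /= ex.
  have hit2 : iter m.+1 (@Tmap R) x0 = y' by rewrite /= hit hTy.
  split; last exact: hit2.
  apply/(IcylS _ _ _ _ (ltn0Sn m)); split; [exact: hx | | |].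
  + by rewrite hit2 lt0r_neq0.
  + by rewrite hit2.
  + by rewrite epsS // (eps_Icyl _ _ _ _ (ltn0Sn m) hx) /= hit hsy /s (int_pm_mul _ _ hDm).
Qed.


Lemma alg2 {R : realType} (A D P y : R) : P != 0 -> (D = 1 \/ D = -1) ->
  D * ((A + D * y / P) - A) * P = y.
Proof. by move=> P0; case=> ->; field. Qed.

Lemma alg3 {R : realType} (A D P x : R) : P != 0 -> (D = 1 \/ D = -1) ->
  A + D * (D * (x - A) * P) / P = x.
Proof. by move=> P0; case=> ->; field. Qed.

Lemma Ichar {R : realType} n sigma delta : inSigma n sigma delta ->
  forall x : R, Icyl n sigma delta x <->
  (let y := (delta1 delta n)%:~R * (x - Asum sigma delta n) * prodsig R sigma n.-1 in
   [/\ 0 < y, y < 1 & d1 y = (sigma n)%:Z]).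
Proof.
move=> hS x.
have n1 : (1 <= n)%N by case: hS.
have [Ha Hb] := @claim R _ _ _ hS n (ltac:(lia)).
have P0 : prodsig R sigma n.-1 != 0 by apply: lt0r_neq0; apply: (@prodsig_pos R _ _ _ hS); lia.
have hD : ((delta1 delta n)%:~R = 1 :> R) \/ ((delta1 delta n)%:~R = -1 :> R).
  by apply: intpm_R; apply: (D_pm hS); lia.
set A := Asum sigma delta n; set P := prodsig R sigma n.-1; set D := (delta1 delta n)%:~R : R.
split.
- move=> hx; have [y0 y1 hd ex] := Ha x hx.
  move: y0 y1 hd ex; set y := iter n.-1 (@Tmap R) x => y0 y1 hd ex.
  have -> : D * (x - A) * P = y.
    by rewrite {1}ex; apply: alg2.
  by split.
- move=> /= [y0 y1 hd].
  have [hx _] := Hb _ y0 y1 hd.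
  rewrite -(alg3 A D P x P0 hD).
  exact: hx.
Qed.

Lemma Keven {R : realType} (s : nat) (y : R) : (2 <= s)%N -> ~~ odd s ->
  (0 < y /\ y < 1 /\ d1 y = s%:Z) <-> (1 < y * (s%:R + 1) /\ y * (s%:R - 1) < 1).
Proof.
move=> s2 hev; have e := even_half _ hev.
move: e; move: (s./2) => k e; subst s.
have k0 : (0 < k)%N by lia.
have K1 : 1 <= k%:R :> R by rewrite ler1n.
rewrite natrM.
split.
- move=> [y0 [y1 hd]].
  case: (d1_inv _ (2 * k)%N y0 (ltac:(lia)) hd) => [[k' [k'0 e' h1 h2 _]]|[[k' [k'0 e' h1 h2 _]]|[ho _]]].
  + have kk : k' = k by lia.
    move: h1 h2; rewrite kk (lt_inv _ _ y0) (inv_le _ _ y0) n2k // natrM => h1 h2; split; lra.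
  + have kk : k' = k by lia.
    move: h1 h2; rewrite kk (lt_inv _ _ y0) (inv_lt _ _ y0) natrD natrM => h1 h2; split; lra.
  + by move: ho; rewrite oddM.
- move=> [h1 h2].
  have y0 : 0 < y by nra.
  split; first exact: y0.
  split; first nra.
  case: (lerP 1 (2 * k%:R * y)) => h3.
  + have h4 : (2 * k - 1)%:R < 1/y by rewrite (lt_inv _ _ y0) n2k //; lra.
    have h5 : 1/y <= (2 * k)%:R by rewrite (inv_le _ _ y0) natrM; lra.
    by case: (d1_up _ _ y0 k0 h4 h5).
  + have h4 : (2 * k)%:R < 1/y by rewrite (lt_inv _ _ y0) natrM; lra.
    have h5 : 1/y < (2 * k + 1)%:R by rewrite (inv_lt _ _ y0) natrD natrM; lra.
    by case: (d1_dn _ _ y0 k0 h4 h5).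
Qed.


Lemma itvs {R : realType} (A P a b x : R) : 0 < P -> 0 < a -> 0 < b ->
  [/\ (A + (-1) / (P * a) < x) = ((-1 * (x - A) * P) * a < 1),
      (x < A + (-1) / (P * b)) = (1 < (-1 * (x - A) * P) * b),
      (A + 1 / (P * b) < x) = (1 < (1 * (x - A) * P) * b) &
      (x < A + 1 / (P * a)) = ((1 * (x - A) * P) * a < 1)].
Proof.
move=> P0 a0 b0.
have Pa : 0 < P * a by apply: mulr_gt0.
have Pb : 0 < P * b by apply: mulr_gt0.
split.
- rewrite (_ : (-1 * (x - A) * P) * a = (A - x) * (P * a)); last by ring.
  rewrite -ltr_pdivlMr // mulN1r mul1r; apply/idP/idP => h; lra.
- rewrite (_ : (-1 * (x - A) * P) * b = (A - x) * (P * b)); last by ring.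
  rewrite -ltr_pdivrMr // mulN1r mul1r; apply/idP/idP => h; lra.
- rewrite (_ : (1 * (x - A) * P) * b = (x - A) * (P * b)); last by ring.
  rewrite -ltr_pdivrMr // mul1r; apply/idP/idP => h; lra.
- rewrite (_ : (1 * (x - A) * P) * a = (x - A) * (P * a)); last by ring.
  rewrite -ltr_pdivlMr // mul1r; apply/idP/idP => h; lra.
Qed.


Lemma meas_itv {R : realType} (a b : R) : a < b ->
  lebesgue_measure (`]a, b[%classic : set R) = (b - a)%:E.
Proof.
move=> ab; rewrite lebesgue_measure_itv /=.
by rewrite lte_fin ab EFinD.
Qed.

Lemma odd_part {R : realType} (n : nat) (sigma : nat -> nat) (delta : nat -> int) :
  inSigma n sigma delta -> odd (sigma n) ->
  exists x0 : R, Icyl n sigma delta = [set x0].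
Proof.
move=> hS ho.
have n1 : (1 <= n)%N by case: hS.
have hs2 := sig_ge2 hS n (ltac:(lia)).
have P0 : prodsig R sigma n.-1 != 0 by apply: lt0r_neq0; apply: (@prodsig_pos R _ _ _ hS); lia.
have hD : ((delta1 delta n)%:~R = 1 :> R) \/ ((delta1 delta n)%:~R = -1 :> R).
  by apply: intpm_R; apply: (D_pm hS); lia.
have spos : 0 < (sigma n)%:R :> R by apply: natpos; lia.
have [_ Hb] := @claim R _ _ _ hS n (ltac:(lia)).
have y0 : 0 < 1 / (sigma n)%:R :> R by rewrite divr_gt0 // ltr01.
have y1 : 1 / (sigma n)%:R < 1 :> R.
  by rewrite (recip_lt spos ltr01) divr1 ltr1n; lia.
have hd : d1 (1 / (sigma n)%:R : R) = (sigma n)%:Z.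
  have e : (2 * (sigma n)./2 + 1)%N = sigma n.
    by have := odd_double_half (sigma n); rewrite ho -mul2n /= addnC.
  have k0 : (0 < (sigma n)./2)%N by lia.
  rewrite -{2}e; apply: d1_odd; [exact: y0 | exact: k0 |].
  by rewrite !div1r invrK e.
exists (Asum sigma delta n + (delta1 delta n)%:~R * (1 / (sigma n)%:R) / prodsig R sigma n.-1).
apply/seteqP; split => x /=.
- move=> /(Ichar _ _ _ hS x) /= [z0 z1 hz].
  case: (d1_inv _ (sigma n) z0 (ltac:(lia)) hz) => [[k [_ e _ _ _]]|[[k [_ e _ _ _]]|[_ hy]]].
  + by move: ho; rewrite e oddM.
  + by move: ho; rewrite e oddM.
  + have ey : 1 / (sigma n)%:R = (delta1 delta n)%:~R * (x - Asum sigma delta n) * prodsig R sigma n.-1.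
      by rewrite -hy !div1r invrK.
    by rewrite ey (alg3 _ _ _ _ P0 hD).
- by move=> ->; exact: (Hb _ y0 y1 hd).1.
Qed.

Lemma int_1N1 : (1 : int) = -1 -> False.
Proof. by move/eqP. Qed.

Lemma meas_alg {R : realType} (A P s : R) : P != 0 -> s - 1 != 0 -> s + 1 != 0 ->
  (A + 1 / (P * (s + -1))) - (A + 1 / (P * (s + 1))) = 2 / (P * (s - 1) * (s + 1)) /\
  (A + -1 / (P * (s + 1))) - (A + -1 / (P * (s + -1))) = 2 / (P * (s - 1) * (s + 1)).
Proof. by move=> P0 s1 s2; split; field; rewrite s2 s1 P0.
Qed.

Lemma even_part {R : realType} (n : nat) (sigma : nat -> nat) (delta : nat -> int) :
  inSigma n sigma delta -> ~~ odd (sigma n) ->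
  let I : set R := Icyl n sigma delta in
  let x1 : R := xpt n sigma (delta1 delta) (-1) in
  let x2 : R := xpt n sigma (delta1 delta) 1 in
     (delta1 delta n = -1 -> I = `]x1, x2[%classic) /\
     (delta1 delta n = 1 -> I = `]x2, x1[%classic) /\
     (lebesgue_measure I =
        (2 / (prodsig R sigma n.-1 * ((sigma n)%:R - 1) * ((sigma n)%:R + 1)))%:E).
Proof.
move=> hS hev I x1 x2.
have n1 : (1 <= n)%N by case: hS.
have hs2 := sig_ge2 hS n (ltac:(lia)).
have Ppos : 0 < prodsig R sigma n.-1 by apply: (@prodsig_pos R _ _ _ hS); lia.
have apos : 0 < (sigma n)%:R - 1 :> R by rewrite subr_gt0 ltr1n.
have bpos : 0 < (sigma n)%:R + 1 :> R by rewrite ltr_wpDl // ltr01.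
have key : forall x, I x <->
  (1 < ((delta1 delta n)%:~R * (x - Asum sigma delta n) * prodsig R sigma n.-1) * ((sigma n)%:R + 1) /\
   ((delta1 delta n)%:~R * (x - Asum sigma delta n) * prodsig R sigma n.-1) * ((sigma n)%:R - 1) < 1).
  move=> x; split.
  - move=> /(Ichar _ _ _ hS x) /= [y0 y1 hd]; apply: (Keven _ _ hs2 hev).1.
    by split; [exact: y0 | split; [exact: y1 | exact: hd]].
  - move=> h; have [y0 [y1 hd]] := (Keven _ _ hs2 hev).2 h.
    by apply/(Ichar _ _ _ hS x); split; [exact: y0 | exact: y1 | exact: hd].
have eq1 : x1 = Asum sigma delta n + (delta1 delta n)%:~R / (prodsig R sigma n.-1 * ((sigma n)%:R + -1)) by [].
have eq2 : x2 = Asum sigma delta n + (delta1 delta n)%:~R / (prodsig R sigma n.-1 * ((sigma n)%:R + 1)) by [].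
have [ma1 ma2] := meas_alg (Asum sigma delta n) _ _ (lt0r_neq0 Ppos) (lt0r_neq0 apos) (lt0r_neq0 bpos).
have mpos : 0 < 2 / (prodsig R sigma n.-1 * ((sigma n)%:R - 1) * ((sigma n)%:R + 1)) :> R.
  by rewrite divr_gt0 // ?ltr0n // !mulr_gt0.
case: (D_pm hS n (ltac:(lia))) => hDn.
- have hDR : (delta1 delta n)%:~R = 1 :> R by rewrite hDn.
  have Ieq : I = `]x2, x1[%classic.
    apply/seteqP; split => x /=; rewrite in_itv /=;
    have [e1 e2 e3 e4] := itvs (Asum sigma delta n) (prodsig R sigma n.-1) _ _ x Ppos apos bpos.
    + move=> /key []; rewrite hDR => h1 h2; apply/andP; split.
      * by rewrite eq2 hDR e3.
      * by rewrite eq1 hDR e4.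
    + move=> /andP []; rewrite eq1 eq2 hDR e3 e4.
      by move=> h1 h2; apply/key; rewrite hDR; split.
  split; first by move=> h; exfalso; apply: int_1N1; rewrite -h hDn.
  split; first by move=> _; exact: Ieq.
  rewrite Ieq meas_itv; first by rewrite eq1 eq2 hDR ma1.
  by rewrite -subr_gt0 eq1 eq2 hDR ma1.
- have hDR : (delta1 delta n)%:~R = -1 :> R by rewrite hDn mulrN1z.
  have Ieq : I = `]x1, x2[%classic.
    apply/seteqP; split => x /=; rewrite in_itv /=;
    have [e1 e2 e3 e4] := itvs (Asum sigma delta n) (prodsig R sigma n.-1) _ _ x Ppos apos bpos.
    + move=> /key []; rewrite hDR => h1 h2; apply/andP; split.
      * by rewrite eq1 hDR e1.
      * by rewrite eq2 hDR e2.
    + move=> /andP []; rewrite eq1 eq2 hDR e1 e2.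
      by move=> h1 h2; apply/key; rewrite hDR; split.
  split; first by move=> _; exact: Ieq.
  split; first by move=> h; exfalso; apply: int_1N1; rewrite -hDn h.
  rewrite Ieq meas_itv; first by rewrite eq1 eq2 hDR ma2.
  by rewrite -subr_gt0 eq1 eq2 hDR ma2.
Qed.


Theorem proposition2p2 (R : realType) (n : nat) (sigma : nat -> nat)
  (delta : nat -> int) :
  inSigma n sigma delta ->
  let I : set R := Icyl n sigma delta in
  let x1 : R := xpt n sigma (delta1 delta) (-1) in
  let x2 : R := xpt n sigma (delta1 delta) 1 in
  (odd (sigma n) ->
     (exists x0 : R, I = [set x0]) /\
     (lebesgue_measure I = 0%E)) /\
  (~~ odd (sigma n) ->
     (delta1 delta n = -1 -> I = `]x1, x2[%classic) /\
     (delta1 delta n = 1 -> I = `]x2, x1[%classic) /\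
     (lebesgue_measure I =
        (2 / (prodsig R sigma n.-1 * ((sigma n)%:R - 1) * ((sigma n)%:R + 1)))%:E)).
Proof.
move=> hS I x1 x2; split.
- move=> ho; have [x0 hx0] := @odd_part R _ _ _ hS ho.
  split; first by exists x0.
  by rewrite /I hx0 lebesgue_measure_set1.
- move=> hev; exact: (@even_part R _ _ _ hS hev).
Qed.
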